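(* Let $\sigma$ be a permutation of length $m$ with exactly one descent and exactly $i$ adjacency pairs, and let $\pi\in\{M_n,W_n\}$ have exactly one descent, with $\sigma\le\pi$. Then $$\mu(\sigma,\pi)=(-1)^{n-m}\binom{\lfloor (n+m-i-a)/2\rfloor}{m},$$ where $a=0$ if $\sigma$ and $\pi$ are related and $a=1$ otherwise.
   Context: A permutation of length $n$ is an arrangement of $1,\dots,n$. The permutation poset is ordered by pattern containment: $\sigma\le\pi$ if $\pi$ has a subsequence in the same relative order as $\sigma$. $\mu$ is its Möbius function: $\mu(a,a)=1$, $\mu(a,b)=-\sum_{a\le z<b}\mu(a,z)$ for $a<b$, $\mu(a,b)=0$ if $a\not\le b$. A descent is an index $d$ with $\pi_d>\pi_{d+1}$. An adjacency pair is an index $j$ with $\sigma_{j+1}=\sigma_j+1$; the number of adjacency pairs is the number of such indices. $M_n$ lists the even numbers $2,4,\dots\le n$ increasingly followed by the odd numbers $1,3,\dots\le n$ increasingly (e.g. $M_6=246135$); $W_n$ lists the odd numbers increasingly followed by the even numbers increasingly (e.g. $W_5=13524$). Two permutations with exactly one descent are related if the letter $1$ lies on the same side of the descent in both (i.e. in both it is before the descent, or in both it is after the descent). *)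

(* Defs.v *)
From mathcomp Require Import all_boot all_order all_algebra.
Set Implicit Arguments. Unset Strict Implicit. Unset Printing Implicit Defensive.
Import GRing.Theory.

Definition is_perm (s : seq nat) : bool := perm_eq s (iota 1 (size s)).

Definition std (s : seq nat) : seq nat :=
  [seq (count (fun y => y < x) s).+1 | x <- s].

Definition contains (sigma pi : seq nat) : bool :=
  [exists t : (size pi).-tuple bool, std (mask t pi) == sigma].

Definition perms_upto (k : nat) : seq (seq nat) :=
  flatten [seq permutations (iota 1 j) | j <- iota 0 k.+1].

Fixpoint mu_rec (fuel : nat) (a b : seq nat) : int :=
  if a == b then 1%R
  else if ~~ contains a b then 0%R
  else match fuel with
       | 0 => 0%R
       | f.+1 => (- \sum_(z <- perms_upto (size b)
                      | [&& contains a z, contains z b & z != b]) mu_rec f a z)%R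
       end.

Definition mu (a b : seq nat) : int := mu_rec (size b).+1 a b.

(* descents: 0-based indices d with s_d > s_{d+1} *)
Definition is_descent (s : seq nat) (d : nat) : bool := nth 0 s d > nth 0 s d.+1.
Definition des (s : seq nat) : nat := count (is_descent s) (iota 0 (size s).-1).
Definition first_descent (s : seq nat) : nat := find (is_descent s) (iota 0 (size s).-1).

Definition adj (s : seq nat) : nat :=
  count (fun j => nth 0 s j.+1 == (nth 0 s j).+1) (iota 0 (size s).-1).

Definition M_perm (n : nat) : seq nat :=
  [seq x <- iota 1 n | ~~ odd x] ++ [seq x <- iota 1 n | odd x].
Definition W_perm (n : nat) : seq nat :=
  [seq x <- iota 1 n | odd x] ++ [seq x <- iota 1 n | ~~ odd x].

Definition one_before_descent (s : seq nat) : bool := index 1 s <= first_descent s.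

Definition related (s t : seq nat) : bool :=
  one_before_descent s == one_before_descent t.

(* Main.v *)
Require Import Defs.
From mathcomp Require Import all_boot all_order all_algebra.
Import GRing.Theory.
From mathcomp Require Import zify.


Definition qw (w : seq bool) (j : nat) : bool := nth false w j.-1.
Definition powL (L : seq nat) (p : pred nat) := filter p L ++ filter (predC p) L.
Definition pow (w : seq bool) := powL (iota 1 (size w)) (qw w).

Lemma map_qw w : map (qw w) (iota 1 (size w)) = w.
Proof.
apply: (@eq_from_nth _ false); first by rewrite size_map size_iota.
move=> j; rewrite size_map size_iota => hj.
by rewrite (nth_map 0) ?size_iota // nth_iota.
Qed.

Lemma size_powL L p : size (powL L p) = size L.
Proof. by rewrite size_cat !size_filter count_predC. Qed.

Lemma size_pow w : size (pow w) = size w.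
Proof. by rewrite size_powL size_iota. Qed.

Lemma perm_powL L p : perm_eq (powL L p) L.
Proof. by rewrite /powL perm_filterC. Qed.

Lemma count_lt_sorted L x : sorted ltn L -> x \in L ->
  count (fun y => y < x) L = index x L.
Proof.
elim: L => [//|y L IH] /= hs.
have hall := order_path_min ltn_trans hs.
rewrite inE; case: eqP => [-> _|/eqP hne hx].
  rewrite ltnn eqxx /=; apply/eqP; rewrite -leqn0 leqNgt -has_count.
  apply/hasPn => z hz; rewrite -leqNgt ltnW //; exact: (allP hall).
rewrite eq_sym (negbTE hne) (allP hall x hx) IH //.
exact: path_sorted hs.
Qed.

Lemma map_index_uniq (L : seq nat) : uniq L ->
  map (fun x => index x L) L = iota 0 (size L).
Proof.
elim: L => [//|y L IH] /= /andP[hy hu].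
rewrite eqxx; congr (_ :: _).
rewrite -(addn0 1) iotaDl -IH //; rewrite -map_comp; apply/eq_in_map => x hx /=.
by case: (y =P x) => // exy; rewrite exy hx in hy.
Qed.

Lemma std_powL L p : sorted ltn L -> std (powL L p) = pow (map p L).
Proof.
move=> hs.
have hu : uniq L by move: hs; rewrite ltn_sorted_uniq_leq => /andP[].
set f := fun x => (index x L).+1.
have -> : std (powL L p) = map f (powL L p).
  rewrite /std; apply/eq_in_map => x hx.
  rewrite (permP (perm_powL L p)) count_lt_sorted //.
  by rewrite -(perm_mem (perm_powL L p)).
have hiota : iota 1 (size (map p L)) = map f L.
  rewrite size_map /f -(addn0 1) iotaDl -map_index_uniq // -map_comp.
  by apply: eq_map => x.
rewrite /pow hiota /powL map_cat !filter_map; congr (_ ++ _); congr map;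
  apply: eq_in_filter => x hx /=; rewrite /qw /f /= (nth_map 0) ?index_mem //;
  by rewrite nth_index.
Qed.


Lemma filter_powL V L p : filter V (powL L p) = powL (filter V L) p.
Proof.
rewrite /powL filter_cat -!filter_predI; congr (_ ++ _); apply: eq_filter => x /=;
  by rewrite andbC.
Qed.

Lemma std_filter_pow w V :
  std (filter V (pow w)) = pow (mask (map V (iota 1 (size w))) w).
Proof.
rewrite /pow filter_powL std_powL; last first.
  apply: sorted_filter; [exact: ltn_trans | exact: iota_ltn_sorted].
by rewrite filter_mask map_mask map_qw.
Qed.

Lemma uniq_pow w : uniq (pow w).
Proof. by rewrite (perm_uniq (perm_powL _ _)) iota_uniq. Qed.

Lemma contains_pow z w : contains z (pow w) ->
  exists m, size m = size w /\ z = pow (mask m w).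
Proof.
case/existsP => t /eqP <-.
have := mask_subseq t (pow w).
move/(subseq_uniqP (uniq_pow w)) => ->.
exists (map (fun x => x \in mask t (pow w)) (iota 1 (size w))).
by rewrite size_map size_iota std_filter_pow.
Qed.

Lemma pow_contains w m : size m = size w -> contains (pow (mask m w)) (pow w).
Proof.
move=> hm.
have hV : map (qw m) (iota 1 (size w)) = m by rewrite -hm map_qw.
apply/existsP.
have hs : size (map (qw m) (pow w)) == size (pow w) by rewrite size_map.
exists (Tuple hs) => /=.
by rewrite -filter_mask std_filter_pow hV.
Qed.

Lemma contains_size z b : contains z b -> size z <= size b.
Proof.
case/existsP => t /eqP <-.
rewrite /std size_map size_mask ?size_tuple //.
have := count_size id t; by rewrite size_tuple.
Qed.

Lemma contains_pow_eqsize z w : contains z (pow w) -> size z = size w -> z = pow w.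
Proof.
case/contains_pow => m [hm ->]; rewrite size_pow => hs.
have [_] := size_subseq_leqif (mask_subseq m w).
by rewrite hs eqxx => /esym/eqP ->.
Qed.

Lemma mem_perms_upto y k : y \in perms_upto k -> size y <= k.
Proof.
case/flatten_mapP => j; rewrite mem_iota => /andP[_ hj].
rewrite mem_permutations => /perm_size ->.
by rewrite size_iota -ltnS.
Qed.

Lemma pow_perms_upto w k : size w <= k -> pow w \in perms_upto k.
Proof.
move=> hw; apply/flatten_mapP; exists (size w); first by rewrite mem_iota.
by rewrite mem_permutations perm_powL.
Qed.

Lemma perms_upto_S k : perms_upto k.+1 = perms_upto k ++ permutations (iota 1 k.+1).
Proof.
rewrite /perms_upto (_ : k.+2 = k.+1 + 1); last by rewrite addn1.
by rewrite iotaD map_cat flatten_cat /= cats0.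
Qed.

Lemma uniq_perms_upto k : uniq (perms_upto k).
Proof.
elim: k => [|k IH]; first by [].
rewrite perms_upto_S cat_uniq IH permutations_uniq /= andbT.
apply/hasPn => y; rewrite mem_permutations => /perm_size hy.
apply/negP => /mem_perms_upto; by rewrite hy /= size_iota ltnn.
Qed.

Lemma perms_upto_split k n : k <= n -> exists R,
  perms_upto n = perms_upto k ++ R /\ forall y, y \in R -> k < size y.
Proof.
move=> hkn; elim: n hkn => [|n IH].
  by rewrite leqn0 => /eqP ->; exists [::]; rewrite cats0.
rewrite leq_eqVlt => /orP[/eqP ->|]; first by exists [::]; rewrite cats0.
rewrite ltnS => hk; have [R [hR hy]] := IH hk.
exists (R ++ permutations (iota 1 n.+1)); split.
  by rewrite perms_upto_S hR catA.
move=> y; rewrite mem_cat => /orP[/hy //|].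
rewrite mem_permutations => /perm_size ->; by rewrite size_iota ltnS.
Qed.

Set Implicit Arguments. Unset Strict Implicit.


Definition wdes (u : seq bool) := subseq [:: false; true] u.
Definition Tv (u : seq bool) := filter (qw u) (iota 1 (size u)).
Definition Fv (u : seq bool) := filter (predC (qw u)) (iota 1 (size u)).

Lemma pow_TF u : pow u = Tv u ++ Fv u. Proof. by []. Qed.

Lemma wdes_idx u : wdes u -> exists j j',
  [/\ j < j', j' < size u, nth false u j = false & nth false u j' = true].
Proof.
elim: u => [//|c u IH]; rewrite /wdes /=.
case: c => /=.
  case/IH => j [j' [h1 h2 h3 h4]]; exists j.+1, j'.+1; split => //.
rewrite sub1seq => ht; exists 0, (index true u).+1; split => //=.
  by rewrite ltnS index_mem.
by rewrite nth_index.
Qed.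

Lemma nwdes_shape u : ~~ wdes u ->
  u = nseq (count id u) true ++ nseq (size u - count id u) false.
Proof.
elim: u => [//|c u IH]; rewrite /wdes /=.
case: c => /= hn.
  by rewrite {1}(IH hn) subSS.
rewrite sub1seq in hn.
have hall : all (pred1 false) u.
  by apply/allP => x hx /=; case: x hx => // hx; rewrite hx in hn.
have hu := all_pred1P _ _ hall.
have -> : count id u = 0 by rewrite hu; elim: (size u).
rewrite /=; congr (_ :: _); rewrite {1}hu; congr nseq; lia.
Qed.

Lemma pow_nseq k l : pow (nseq k true ++ nseq l false) = iota 1 (k + l).
Proof.
rewrite /pow size_cat !size_nseq /powL iotaD !filter_cat.
set q := qw _.
have hq : forall j, 0 < j <= k + l -> q j = (j <= k).
  case=> [//|j] /andP[h1 h2]; rewrite /q /qw /= nth_cat size_nseq nth_nseq.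
  case: ifP => h; first by rewrite h.
  by rewrite nth_nseq; case: ifP.
rewrite (@eq_in_filter _ q predT (iota 1 k)); last first.
  move=> j; rewrite mem_iota => hj /=; rewrite hq; lia.
rewrite (@eq_in_filter _ q pred0 (iota (1 + k) l)); last first.
  move=> j; rewrite mem_iota => hj /=; rewrite hq; lia.
rewrite (@eq_in_filter _ (predC q) pred0 (iota 1 k)); last first.
  move=> j; rewrite mem_iota => hj /=; rewrite hq; lia.
rewrite (@eq_in_filter _ (predC q) predT (iota (1 + k) l)); last first.
  move=> j; rewrite mem_iota => hj /=; rewrite hq; lia.
by rewrite !filter_pred0 !filter_predT cats0.
Qed.

Lemma des_iota n : des (iota 1 n) = 0.
Proof.
apply/eqP; rewrite -leqn0 leqNgt -has_count; apply/hasPn => j.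
rewrite size_iota mem_iota /is_descent => hj.
rewrite !nth_iota; lia.
Qed.

Lemma des_nwdes u : ~~ wdes u -> des (pow u) = 0.
Proof. by move/nwdes_shape => ->; rewrite pow_nseq des_iota. Qed.

Lemma size_Tv u : size (Tv u) = count id u.
Proof. by rewrite size_filter -[in RHS](map_qw u) count_map. Qed.

Lemma sorted_Tv u : sorted ltn (Tv u).
Proof. apply: sorted_filter; [exact: ltn_trans | exact: iota_ltn_sorted]. Qed.
Lemma sorted_Fv u : sorted ltn (Fv u).
Proof. apply: sorted_filter; [exact: ltn_trans | exact: iota_ltn_sorted]. Qed.

Lemma sorted_head_le s y : sorted ltn s -> y \in s -> head 0 s <= y.
Proof.
case: s => [//|x s] /= hs; rewrite inE => /orP[/eqP -> //|hy].
have := order_path_min ltn_trans hs => /allP/(_ y hy); exact: ltnW.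
Qed.

Lemma path_last_ge x s y : path ltn x s -> y \in x :: s -> y <= last x s.
Proof.
elim: s x y => [|z s IH] x y /=; first by rewrite inE => _ /eqP ->.
move=> /andP[hxz hp]; rewrite inE => /orP[/eqP ->|hy].
  apply: leq_trans (ltnW hxz) _; exact: (IH z z hp (mem_head _ _)).
exact: IH.
Qed.

Lemma sorted_last_ge s y : sorted ltn s -> y \in s -> y <= last 0 s.
Proof. case: s => [//|x s] /= hs hy; exact: path_last_ge. Qed.

Lemma wdes_blocks u : wdes u ->
  [/\ 0 < count id u, count id u < size u & head 0 (Fv u) < last 0 (Tv u)].
Proof.
case/wdes_idx => j [j' [h1 h2 h3 h4]].
have hT : j'.+1 \in Tv u by rewrite mem_filter /qw /= h4 mem_iota; lia.
have hF : j.+1 \in Fv u by rewrite mem_filter /qw /= h3 mem_iota; lia.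
split.
- by rewrite -size_Tv; case: (Tv u) hT.
- rewrite -size_Tv.
  have := size_powL (iota 1 (size u)) (qw u); rewrite size_cat size_iota.
  rewrite -/(Tv u) -/(Fv u); case: (Fv u) hF => // x s _; rewrite /=; lia.
- have := @sorted_head_le _ _ (sorted_Fv u) hF.
  have := @sorted_last_ge _ _ (sorted_Tv u) hT; lia.
Qed.

Lemma find_eq (T : Type) (a : pred T) x0 (s : seq T) j :
  (forall i, i < j -> ~~ a (nth x0 s i)) -> j < size s -> a (nth x0 s j) ->
  find a s = j.
Proof.
elim: s j => [//|y s IH] [|j] /= hb hj ha; first by rewrite ha.
have := hb 0 isT; rewrite /= => /negbTE ->; congr S; apply: IH => //.
by move=> i hi; exact: (hb i.+1).
Qed.

Lemma is_descent_pow u i : wdes u -> i < size u - 1 ->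
  is_descent (pow u) i = (i == (count id u).-1).
Proof.
move=> hw hi; have [h1 h2 h3] := wdes_blocks hw.
rewrite /is_descent pow_TF !nth_cat size_Tv.
have hs := size_Tv u.
have hsF : size (Fv u) = size u - count id u.
  have := size_powL (iota 1 (size u)) (qw u); rewrite size_cat size_iota.
  rewrite -/(Tv u) -/(Fv u) hs; lia.
case: (ltngtP i (count id u).-1) => hic.
- rewrite ifT; last lia. rewrite ifT; last lia.
  apply/negbTE; rewrite -leqNgt ltnW //.
  apply: (sorted_ltn_nth ltn_trans); rewrite ?inE /= ?hs; try lia; exact: sorted_Tv.
- rewrite ifF; last lia. rewrite ifF; last lia.
  apply/negbTE; rewrite -leqNgt ltnW //.
  rewrite (_ : i.+1 - count id u = (i - count id u).+1); last lia.
  apply: (sorted_ltn_nth ltn_trans); rewrite ?inE /= ?hsF; try lia; exact: sorted_Fv.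
- rewrite ifF; last lia. rewrite ifT; last lia.
  have hl : nth 0 (Tv u) (count id u).-1 = last 0 (Tv u) by rewrite -hs nth_last.
  rewrite hic hl (_ : (count id u).-1.+1 - count id u = 0); last lia.
  by rewrite nth0 h3.
Qed.

Lemma first_descent_pow u : wdes u -> first_descent (pow u) = (count id u).-1.
Proof.
move=> hw; have [h1 h2 h3] := wdes_blocks hw.
rewrite /first_descent size_pow; apply: (@find_eq _ _ 0).
- move=> i hi; rewrite nth_iota; last lia.
  rewrite is_descent_pow //; try lia; apply/negP => /eqP; lia.
- rewrite size_iota; lia.
- rewrite nth_iota; last lia.
  rewrite is_descent_pow //; try lia; apply/eqP; lia.
Qed.


Lemma wdes_des_pos u : wdes u -> 0 < des (pow u).
Proof.
move=> hw; have [h1 h2 h3] := wdes_blocks hw.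
rewrite /des -has_count; apply/hasP; exists (count id u).-1.
  rewrite mem_iota size_pow; lia.
rewrite is_descent_pow //; lia.
Qed.

Lemma u_of_Tv u : u = map (fun j => j \in Tv u) (iota 1 (size u)).
Proof.
rewrite -[in LHS](map_qw u); apply/eq_in_map => j hj.
by rewrite /Tv mem_filter hj andbT.
Qed.

Lemma pow_inj u u' : wdes u -> pow u = pow u' -> u = u'.
Proof.
move=> hw he.
have hsz : size u = size u' by rewrite -size_pow he size_pow.
case hw' : (wdes u'); last first.
  have := wdes_des_pos hw; rewrite he des_nwdes ?hw' //.
have [h1 _ _] := wdes_blocks hw; have [h1' _ _] := wdes_blocks hw'.
have hc : count id u = count id u'.
  have := first_descent_pow hw; rewrite he first_descent_pow //; lia.
have hT : Tv u = Tv u'.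
  have := congr1 (take (count id u)) he.
  rewrite !pow_TF take_size_cat ?size_Tv // hc take_size_cat ?size_Tv //.
by rewrite (u_of_Tv u) (u_of_Tv u') hT hsz.
Qed.

Lemma contains_powE u w : wdes u -> contains (pow u) (pow w) = subseq u w.
Proof.
move=> hw; apply/idP/idP.
  case/contains_pow => m [hm /(pow_inj hw) ->]; exact: mask_subseq.
case/subseqP => m hm ->; exact: pow_contains.
Qed.

Lemma obd_pow u : wdes u -> one_before_descent (pow u) = nth false u 0.
Proof.
move=> hw; have [h1 h2 h3] := wdes_blocks hw.
rewrite /one_before_descent first_descent_pow // pow_TF index_cat.
case: u hw h1 h2 h3 => [//|c u] hw h1 h2 h3.
have hT : Tv (c :: u) = if c then 1 :: filter (qw (c :: u)) (iota 2 (size u))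
                        else filter (qw (c :: u)) (iota 2 (size u)).
  by rewrite /Tv /=; case: c {hw h1 h2 h3}.
have h1nT : (1 \in Tv (c :: u)) = c.
  rewrite hT; case: c {hT hw h1 h2 h3} => /=; first by rewrite mem_head.
  by rewrite mem_filter mem_iota.
rewrite h1nT; case: c hT h1 {h1nT hw h2 h3} => hT h1 /=.
  by [].
rewrite size_Tv; apply/negbTE; rewrite -ltnNge.
rewrite /= in h1 *; lia.
Qed.

Definition zc (T : Type) (R : T -> T -> bool) (s : seq T) :=
  count (fun p => R p.1 p.2) (zip s (behead s)).

Lemma zc_cons (T : Type) (R : T -> T -> bool) x s :
  zc R (x :: s) = (if s is y :: _ then R x y else false) + zc R s.
Proof. by case: s. Qed.

Lemma adj_zc s : adj s = zc (fun x y => y == x.+1) s.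
Proof.
rewrite /adj.
elim: s => [//|x s IH]; case: s IH => [//|y s] IH.
rewrite zc_cons -IH /= -(addn0 1) iotaDl.
by rewrite count_map.
Qed.

Fixpoint eqadj (u : seq bool) : nat :=
  match u with
  | c :: ((d :: _) as u') => (c == d) + eqadj u'
  | _ => 0
  end.

Lemma eqadj_zc u : eqadj u = zc (fun a b => a == b) u.
Proof.
elim: u => [//|c u IH]; rewrite zc_cons -IH; case: u {IH} => //.
Qed.

Lemma zc_map (T U : Type) (R : U -> U -> bool) (f : T -> U) s :
  zc R (map f s) = zc (fun x y => R (f x) (f y)) s.
Proof.
elim: s => [//|x s IH]; rewrite /= zc_cons IH zc_cons; case: s {IH} => //.
Qed.

Lemma zc_iota (R : nat -> nat -> bool) j k :
  zc R (iota j k) = count (fun l => R l l.+1) (iota j k.-1).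
Proof.
elim: k j => [//|k IH] j; rewrite /= zc_cons IH.
case: k {IH} => //.
Qed.

Lemma zc_cat (R : nat -> nat -> bool) a b : a != [::] -> b != [::] ->
  zc R (a ++ b) = zc R a + zc R b + R (last 0 a) (head 0 b).
Proof.
elim: a => [//|x a IH] _ hb; rewrite cat_cons zc_cons zc_cons.
case: a IH => [|y a] IH /=.
  by case: b hb {IH} => // z b _; rewrite /zc /=; lia.
rewrite IH //.
by rewrite /= !addnA.
Qed.

Lemma zc_filter_iota (P : pred nat) j k :
  zc (fun x y => y == x.+1) (filter P (iota j k)) =
  count (fun l => P l && P l.+1) (iota j k.-1).
Proof.
elim: k j => [//|k IH] j.
rewrite [iota j k.+1]/= /=.
have hhead : forall s, all (fun x => j.+1 < x) s ->
   (match s with [::] => 0 | y :: _ => nat_of_bool (y == j.+1) end) = 0.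
  by case=> [//|y s] /= /andP[hy _]; lia.
case: k IH => [|k] IH.
  by case: (P j).
rewrite [iota j.+1 k.+1]/=.
case hPj : (P j) => /=; last by rewrite IH /= hPj.
rewrite zc_cons -IH /=.
case hP1 : (P j.+1) => /=; first by rewrite eqxx hPj.
rewrite hhead ?andbF ?addn0 //.
apply/allP => x; rewrite mem_filter mem_iota; lia.
Qed.

Lemma adj_pow u : wdes u -> adj (pow u) = eqadj u.
Proof.
move=> hw; have [h1 h2 h3] := wdes_blocks hw.
have hT : Tv u != [::] by rewrite -size_eq0 size_Tv; lia.
have hF : Fv u != [::].
  have := size_powL (iota 1 (size u)) (qw u); rewrite size_cat size_iota.
  rewrite -/(Tv u) -/(Fv u) size_Tv; case: (Fv u) => //=; lia.
rewrite adj_zc pow_TF zc_cat // /Tv /Fv !zc_filter_iota.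
have -> : (head 0 (filter (predC (qw u)) (iota 1 (size u))) ==
    (last 0 (filter (qw u) (iota 1 (size u)))).+1) = false.
  apply/negbTE; move: h3; rewrite /Tv /Fv; lia.
have hz := congr1 (zc (fun a b : bool => a == b)) (map_qw u).
rewrite zc_map zc_iota in hz.
rewrite addn0 eqadj_zc -hz.
rewrite -count_predUI.
rewrite (@eq_count _ (predI _ _) pred0); last first.
  by move=> l /=; case: (qw u l); case: (qw u l.+1).
rewrite count_pred0 addn0; apply: eq_count => l /=.
by case: (qw u l); case: (qw u l.+1).
Qed.


Fixpoint masks (n : nat) : seq (seq bool) :=
  if n is k.+1 then map (cons false) (masks k) ++ map (cons true) (masks k)
  else [:: [::]].

Lemma size_masks n m : m \in masks n -> size m = n.
Proof.
elim: n m => [|n IH] m /=; first by rewrite inE => /eqP ->.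
rewrite mem_cat => /orP[] /mapP [m' hm' ->] /=; by rewrite IH.
Qed.

Definition alt (A : seq bool) := sorted (fun a b : bool => a != b) A.

Definition Ssum (x A : seq bool) : int :=
  \sum_(m <- masks (size A))
     (if subseq x (mask m A) then (-1) ^+ (size A - count id m) else 0)%R.

Definition xo (c : bool) (x : seq bool) :=
  if x is y :: x' then (if y == c then x' else x) else [::].

Lemma subseq_cons_r (x w : seq bool) c : subseq x (c :: w) = subseq (xo c x) w.
Proof. by case: x => [|y x] //=; rewrite sub0seq. Qed.

Lemma Ssum_step x c A : Ssum x (c :: A) = (- Ssum x A + Ssum (xo c x) A)%R.
Proof.
rewrite /Ssum /= big_cat !big_map /=; congr (_ + _)%R.
  rewrite -sumrN big_seq [in RHS]big_seq; apply: eq_bigr => m hm.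
  have hs := size_masks hm.
  have hc : count id m <= size A by rewrite -hs count_size.
  case: ifP => _; last by rewrite oppr0.
  by rewrite subSn // exprS mulN1r.
apply: eq_bigr => m _; rewrite add1n subSS.
by case: x => [|y x] //=; rewrite sub0seq.
Qed.

Lemma Ssum_nil x : Ssum x [::] = ((x == [::])%:R)%R.
Proof.
rewrite /Ssum /= big_cons big_nil addr0 /=.
by case: x.
Qed.

Lemma alt_cons c A : alt (c :: A) -> alt A /\ (A != [::] -> head false A != c).
Proof.
rewrite /alt /=; case: A => [//|d A] /= /andP[h1 h2]; split => //.
by rewrite eq_sym.
Qed.

Lemma C2 A x : alt A -> Ssum x A = ((x == A)%:R)%R.
Proof.
elim: A x => [|c A IH] x; first by rewrite Ssum_nil.
case/alt_cons => ha hh.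
rewrite Ssum_step !IH //.
case: x => [|y x] /=.
  by rewrite addNr.
case: (y =P c) => [->|hyc].
  have -> : (c :: x == A) = false.
    apply/negbTE/eqP => hA; move: hh; rewrite -hA /= eqxx => /(_ isT).
    by [].
  by rewrite oppr0 add0r eqseq_cons eqxx.
rewrite addNr eqseq_cons; case: (y =P c) => //.
Qed.

Definition Ncnt (u A : seq bool) := count (fun m => mask m A == u) (masks (size A)).

Lemma Ncnt_step u c A : Ncnt u (c :: A) =
  Ncnt u A + (if u is d :: u' then (if d == c then Ncnt u' A else 0) else 0).
Proof.
rewrite /Ncnt /= count_cat !count_map; congr (_ + _).
case: u => [|d u] /=.
  by apply/eqP; rewrite -leqn0 leqNgt -has_count; apply/hasPn.
rewrite eq_sym; case: (c =P d) => [->|hcd].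
  by apply: eq_count => m /=; rewrite eqseq_cons eqxx.
apply/eqP; rewrite -leqn0 leqNgt -has_count; apply/hasPn => m _ /=.
by rewrite eqseq_cons; case: (c =P d).
Qed.

Lemma Ncnt_nil A : Ncnt [::] A = 1.
Proof.
elim: A => [//|c A IH]; by rewrite Ncnt_step IH addn0.
Qed.

Lemma eqadj_le u : eqadj u <= (size u).-1.
Proof.
elim: u => [//|c u IH]; case: u IH => [//|d u] /= IH; lia.
Qed.

Lemma Ncnt_nilA u : u != [::] -> Ncnt u [::] = 0.
Proof. by case: u. Qed.

Lemma C3 A d u : alt A ->
  Ncnt (d :: u) A =
  'C((size A + (size u).+1 - eqadj (d :: u) -
      (if d == nth false A 0 then 0 else 1))./2, (size u).+1).
Proof.
elim: A d u => [|c A IH] d u.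
  move=> _; rewrite Ncnt_nilA // bin_small //.
  have := eqadj_le (d :: u); rewrite /=; lia.
case/alt_cons => ha hh.
rewrite Ncnt_step (_ : nth false (c :: A) 0 = c) // (_ : size (c :: A) = (size A).+1) //.
have hi : eqadj (d :: u) <= size u := eqadj_le (d :: u).
have hN1 : Ncnt (d :: u) A = 'C((size A + (size u).+1 - eqadj (d :: u) -
      (if d == c then 1 else 0))./2, (size u).+1).
  rewrite IH //; case: A ha hh IH => [|f A] ha hh IH.
    by rewrite !bin_small //=; lia.
  have hf : f != c by apply: hh.
  have E : forall d c f : bool, f != c ->
    (if d == f then 0 else 1) = (if d == c then 1 else 0) by do 3 case.
  by rewrite /= (E d c f hf).
case: (d =P c) => [edc|ndc]; last first.
  rewrite addn0 hN1; congr ('C(_, _)).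
  have -> : (d == c) = false by apply/eqP.
  lia.
subst d; rewrite hN1 eqxx.
have hN2 : Ncnt u A = 'C((size A + (size u).+1 - eqadj (c :: u) - 1)./2, size u).
  case: u hi hN1 => [|e u] hi hN1; first by rewrite Ncnt_nil bin0.
  rewrite IH //.
  have hi' : eqadj (e :: u) <= size u := eqadj_le (e :: u).
  have -> : eqadj (c :: e :: u) = (c == e) + eqadj (e :: u) by [].
  rewrite (_ : size (e :: u) = (size u).+1) //.
  case: A ha hh IH hN1 => [|f A] ha hh IH hN1.
    rewrite !bin_small //=; lia.
  have hf : f != c by apply: hh.
  have E2 : forall c e f : bool, f != c -> (if e == f then 0 else 1) = (c == e)
    by do 3 case.
  rewrite (_ : nth false (f :: A) 0 = f) // (E2 c e f hf); congr ('C(_, _)); lia.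
rewrite hN2 -binS; congr ('C(_, _)); lia.
Qed.


Lemma inversion (T : eqType) (J : seq T) (le : T -> T -> bool) (mu g : T -> int)
  (s t : T) :
  uniq J -> s \in J -> t \in J ->
  (forall z, z \in J -> (\sum_(y <- J | le y z) mu y = ((z == s)%:R))%R) ->
  (forall x, x \in J -> (\sum_(z <- J | le x z) g z = ((x == t)%:R))%R) ->
  mu t = g s.
Proof.
move=> hu hs ht ha hb.
have e1 : mu t = (\sum_(y <- J) mu y * ((y == t)%:R))%R.
  rewrite (bigD1_seq t) //= eqxx mulr1 big1 ?addr0 // => y /negbTE ->.
  by rewrite mulr0.
have e2 : (\sum_(y <- J) mu y * ((y == t)%:R) =
   \sum_(y <- J) \sum_(z <- J) (if le y z then mu y * g z else 0))%R.
  rewrite big_seq [RHS]big_seq; apply: eq_bigr => y hy.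
  by rewrite -hb // mulr_sumr big_mkcond; apply: eq_bigr => z _; case: ifP.
rewrite e1 e2 exchange_big /=.
have e3 : (\sum_(z <- J) \sum_(y <- J) (if le y z then mu y * g z else 0) =
   \sum_(z <- J) g z * ((z == s)%:R))%R.
  rewrite big_seq [RHS]big_seq; apply: eq_bigr => z hz.
  rewrite -ha // mulr_sumr [RHS]big_mkcond; apply: eq_bigr => y _; case: ifP => //.
  by rewrite mulrC.
rewrite e3 (bigD1_seq s) //= eqxx mulr1 big1 ?addr0 // => y /negbTE ->.
by rewrite mulr0.
Qed.

Lemma mu_rec_S f a b : mu_rec f.+1 a b =
  if a == b then 1%R
  else if ~~ contains a b then 0%R
  else (- \sum_(z <- perms_upto (size b)
                      | [&& contains a z, contains z b & z != b]) mu_rec f a z)%R.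
Proof. by []. Qed.

Lemma contains_pow_lt z w : contains z (pow w) -> z != pow w ->
  exists w', z = pow w' /\ size w' < size w /\ subseq w' w.
Proof.
move=> hc hne; have [m [hm hz]] := contains_pow _ _ hc.
exists (mask m w); split => //; split; last exact: mask_subseq.
rewrite ltn_neqAle size_subseq ?mask_subseq // andbT.
apply/negP => /eqP he; move/negP: hne; apply.
by rewrite (contains_pow_eqsize _ _ hc) // hz size_pow.
Qed.

Lemma mu_fuel_aux N : forall a w f, size w <= N -> size w < f ->
  mu_rec f a (pow w) = mu_rec (size w).+1 a (pow w).
Proof.
elim: N => [|N IH] a w f hN hf;
  case: f hf => [//|f] hf; rewrite !mu_rec_S;
  case: ifP => // _; case: ifP => // _; congr (- _)%R;
  rewrite big_seq_cond [in RHS]big_seq_cond; apply: eq_bigr => z;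
  case/and4P => _ _ hzc hne;
  have [w' [-> [hs _]]] := contains_pow_lt hzc hne; first by lia.
rewrite (IH a w' f) //; try lia.
by rewrite (IH a w' (size w)) //; lia.
Qed.

Lemma mu_powE a w f : size w < f -> mu_rec f a (pow w) = mu a (pow w).
Proof.
move=> hf; rewrite /mu size_pow (@mu_fuel_aux (size w) a w f (leqnn _) hf).
by [].
Qed.

Lemma sum_const_cnt (T : Type) (r : seq T) (P : pred T) (x : int) :
  (\sum_(i <- r | P i) x = x *+ count P r)%R.
Proof.
elim: r => [|y r IH]; first by rewrite big_nil.
by rewrite big_cons IH /=; case: (P y); rewrite ?mulrS ?add0n.
Qed.


Lemma main_words A u0 : alt A -> wdes u0 -> subseq u0 A ->
  mu (pow u0) (pow A) = ((-1) ^+ (size A - size u0) * (Ncnt u0 A)%:Z)%R.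
Proof.
move=> halt hw hsub.
set n := size A.
set sg := pow u0. set pi := pow A.
set I := [seq z <- perms_upto n | contains sg z && contains z pi].
pose g := fun z => (\sum_(m <- masks n | pow (mask m A) == z)
                      ((-1) ^+ (n - size z)))%R : int.
have hwA : wdes A := subseq_trans hw hsub.
have F1 : forall z, z \in I -> exists uz,
    [/\ z = pow uz, subseq uz A, wdes uz & subseq u0 uz].
  move=> z; rewrite mem_filter => /andP[/andP[hc1 hc2] _].
  have [m [hm hz]] := contains_pow _ _ hc2.
  exists (mask m A); rewrite hz in hc1 *.
  rewrite contains_powE // in hc1.
  split => //; [exact: mask_subseq | exact: subseq_trans hw hc1].
have F2 : forall uz, subseq u0 uz -> subseq uz A -> pow uz \in I.
  move=> uz h1 h2; have hwz : wdes uz := subseq_trans hw h1.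
  rewrite mem_filter /sg /pi !contains_powE // h1 h2 /=.
  by apply: pow_perms_upto; exact: size_subseq.
have huI : uniq I by apply: filter_uniq; exact: uniq_perms_upto.
have hsI : sg \in I := F2 u0 (subseq_refl _) hsub.
have htI : pi \in I := F2 A hsub (subseq_refl _).
have -> : ((-1) ^+ (n - size u0) * (Ncnt u0 A)%:Z)%R = g sg.
  rewrite /g /sg size_pow sum_const_cnt -natz mulr_natr; congr (_ *+ _)%R.
  apply: eq_count => m /=; apply/eqP/eqP => [-> // | h]; by rewrite (pow_inj hw (esym h)).
apply: (@inversion _ I contains (mu sg) g sg pi huI hsI htI).
- move=> z hz; have [uz [hzu hzA hwz h0z]] := F1 z hz; rewrite hzu.
  case: (pow uz =P sg) => [ezs|nzs].
    rewrite ezs -big_filter.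
    have -> : [seq y <- I | contains y sg] = [seq y <- I | y == sg].
      apply: eq_in_filter => y hy; have [uy [-> hyA hwy h0y]] := F1 y hy.
      rewrite /sg contains_powE //; apply/idP/eqP => [h|/(pow_inj hwy) ->] //.
      by rewrite (@subseq_anti _ uy u0) // h h0y.
    rewrite (filter_pred1_uniq huI hsI) big_cons big_nil addr0.
    by rewrite /mu mu_rec_S eqxx.
  rewrite -big_filter (bigD1_seq (pow uz)); first last.
  + exact: filter_uniq.
  + rewrite mem_filter -{3}hzu hz andbT.
    have := pow_contains uz (nseq (size uz) true) (size_nseq _ _).
    by rewrite mask_true.
  rewrite big_filter_cond /=.
  have hsz : size uz <= n by exact: size_subseq hzA.
  have [R [hR hRs]] := perms_upto_split _ _ hsz.
  have hsgz : contains sg (pow uz) by rewrite /sg contains_powE.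
  have hmu : mu sg (pow uz) = (- \sum_(w <- perms_upto (size uz) |
      [&& contains sg w, contains w (pow uz) & w != pow uz])
      mu_rec (size uz) sg w)%R.
    rewrite /mu mu_rec_S size_pow hsgz /=.
    have -> : (sg == pow uz) = false by apply/eqP => e; apply: nzs; rewrite e.
    by [].
  rewrite hmu; apply/eqP; rewrite addrC subr_eq0; apply/eqP.
  rewrite /I big_filter_cond hR big_cat /= [X in (_ + X)%R]big1_seq ?addr0; last first.
    move=> y /andP[/andP[_ /andP[hyz _]] hyR].
    have := contains_size _ _ hyz; have := hRs y hyR; rewrite size_pow => h1 h2.
    by have := leq_ltn_trans h2 h1; rewrite ltnn.
  rewrite big_seq_cond [RHS]big_seq_cond; apply: eq_big => [y|y].
    case hyz : (contains y (pow uz)); last by rewrite !andbF.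
    have hyp : contains y pi.
      have [m [hm ->]] := contains_pow _ _ hyz.
      have := subseq_trans (mask_subseq m uz) hzA.
      by case/subseqP => m' hm' ->; apply: pow_contains.
    rewrite hyp /=.
    by case: (y \in perms_upto _); case: (contains sg y); case: (y != pow uz).
  case/andP => _ /andP[_ /andP[hyz hne]].
  have [w' [-> [hs _]]] := contains_pow_lt hyz hne.
  by rewrite mu_powE.
- move=> x hx; have [ux [hxu hxA hwx h0x]] := F1 x hx; rewrite hxu.
  have -> : (pow ux == pi) = (ux == A).
    by apply/eqP/eqP => [/(pow_inj hwx) | ->].
  rewrite -(C2 ux halt) /Ssum -/n big_mkcond /=.
  rewrite (eq_bigr (fun z => \sum_(m <- masks n)
     (if contains (pow ux) z && (pow (mask m A) == z)
      then (-1) ^+ (n - size z) else 0))%R); last first.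
    move=> z _; case: ifP => hc /=; first by rewrite /g big_mkcond.
    by rewrite big1.
  rewrite exchange_big /= big_seq [RHS]big_seq; apply: eq_bigr => m hm.
  have hsm := size_masks hm.
  have e : contains (pow ux) (pow (mask m A)) = subseq ux (mask m A).
    by rewrite contains_powE.
  have hsz : size (pow (mask m A)) = count id m by rewrite size_pow size_mask.
  case hs : (subseq ux (mask m A)).
    have hI : pow (mask m A) \in I := F2 _ (subseq_trans h0x hs) (mask_subseq _ _).
    rewrite (bigD1_seq (pow (mask m A))) //= e hs eqxx /= hsz big1 ?addr0 //.
    move=> z hz; rewrite (_ : (pow (mask m A) == z) = false) ?andbF //.
    by apply/negbTE; rewrite eq_sym.
  apply: big1 => z _; case: eqP => [<-|_]; by rewrite ?e ?hs ?andbF.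
Qed.


Lemma pow_map (p : pred nat) n :
  pow (map p (iota 1 n)) = filter p (iota 1 n) ++ filter (predC p) (iota 1 n).
Proof.
have hq : {in iota 1 n, qw (map p (iota 1 n)) =1 p}.
  move=> j; rewrite mem_iota => hj; rewrite /qw (nth_map 0) ?size_iota; last lia.
  rewrite nth_iota; last lia. congr p; lia.
rewrite /pow /powL size_map size_iota; congr (_ ++ _); apply: eq_in_filter => j hj /=.
  exact: hq.
by rewrite hq.
Qed.

Lemma alt_map (p : pred nat) j k : (forall x, p x != p x.+1) ->
  alt (map p (iota j k)).
Proof.
move=> hp; elim: k j => [//|k IH] j.
rewrite /alt /=; case: k IH => [//|k] IH /=.
rewrite hp /=; exact: (IH j.+1).
Qed.

Unset Implicit Arguments.

Theorem mainTheorem12 (n m i : nat) (sigma pi : seq nat) :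
  is_perm sigma -> size sigma = m -> des sigma = 1 -> adj sigma = i ->
  (pi = M_perm n \/ pi = W_perm n) -> des pi = 1 ->
  contains sigma pi ->
  mu sigma pi =
    ((-1) ^+ (n - m) *
     ('C((n + m - i - (if related sigma pi then 0%N else 1%N))./2, m))%:Z)%R.
Proof.
move=> _ hsz hdes hadj hpi _ hc.
have [A [hpiA halt hsA]] : exists A, [/\ pi = pow A, alt A & size A = n].
  case: hpi => ->.
    exists (map (fun j => ~~ odd j) (iota 1 n)); split.
    - rewrite pow_map /M_perm; congr (_ ++ _); apply: eq_filter => x /=.
      by rewrite negbK.
    - by apply: alt_map => x /=; case: (odd x).
    - by rewrite size_map size_iota.
  exists (map odd (iota 1 n)); split.
  - by rewrite pow_map /W_perm.
  - by apply: alt_map => x /=; case: (odd x).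
  - by rewrite size_map size_iota.
subst pi.
have [m0 [hm0 hsig]] := contains_pow _ _ hc.
have hsub := mask_subseq m0 A.
move: (mask m0 A) hsub hsig => u0 hsub hsig.
have hw : wdes u0.
  apply/negPn/negP => hn; have := des_nwdes hn; by rewrite -hsig hdes.
subst sigma.
rewrite main_words // -hsz size_pow hsA -hadj adj_pow //.
rewrite /related !obd_pow //; last exact: subseq_trans hw hsub.
clear hadj hdes hsz hc; case: u0 hw hsub => [//|d u] hw hsub.
rewrite C3 // hsA.
rewrite /=; reflexivity.
Qed.
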